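(* Let $P_Z=\mathcal N(0,I)$ on $\mathbb{R}^s$ and let $\mathcal T\colon\mathbb{R}^s\to\mathbb{R}^s$ be a bi-Lipschitz diffeomorphism, i.e. $\mathrm{Lip}(\mathcal T)<\infty$ and $\mathrm{Lip}(\mathcal T^{-1})<\infty$. Let $P_1,\dots,P_{N_p}\colon\mathbb{R}^d\to\mathbb{R}^s$ be patch-extraction operators, each selecting a fixed set of $s$ distinct coordinates of $x\in\mathbb{R}^d$, such that every coordinate $k\in\{1,\dots,d\}$ is selected by at least one $P_i$. Define $$\mathrm{patchNR}(x)=\frac{1}{s}\sum_{i=1}^{N_p}-\log\big(p_{\mathcal T_\#P_Z}(P_i(x))\big),\qquad x\in\mathbb{R}^d.$$ Then for every $\rho>0$, the function $\varphi(x)=\exp(-\rho\,\mathrm{patchNR}(x))$ belongs to $L^1(\mathbb{R}^d)$.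
   Context: $\mathcal T_\#P_Z=P_Z\circ\mathcal T^{-1}$ is the push-forward of $P_Z$ under $\mathcal T$, with density $p_{\mathcal T_\#P_Z}(\mathrm p)=p_Z(\mathcal T^{-1}(\mathrm p))\,|\det(\nabla\mathcal T^{-1}(\mathrm p))|$, where $p_Z$ is the standard normal density on $\mathbb{R}^s$. Images are vectorized as elements of $\mathbb{R}^d$, patches as elements of $\mathbb{R}^s$. *)

(* Defs.v *)
From HB Require Import structures.
From mathcomp Require Import all_boot all_order all_algebra.
From mathcomp Require Import all_classical all_reals all_analysis.
Set Implicit Arguments. Unset Strict Implicit. Unset Printing Implicit Defensive.
Import Order.TTheory GRing.Theory Num.Theory.
Import numFieldNormedType.Exports.
Local Open Scope classical_set_scope.
Local Open Scope ring_scope.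

Section defs.
Variable R : realType.

(** Vectors of R^n are row vectors 'rV[R]_n (normed space, max norm). *)

Definition row_of_tuple n (t : n.-tuple R) : 'rV[R]_n := \row_i tnth t i.

(** For nonnegative measurable functions this is (Tonelli) the integral
    against n-dimensional Lebesgue measure. *)
Fixpoint iter_lebesgue_integral (n : nat) : (n.-tuple R -> \bar R) -> \bar R :=
  match n with
  | 0%N => fun f => f [tuple]
  | n'.+1 => fun f =>
      (\int[@lebesgue_measure R]_(x in [set: R])
          iter_lebesgue_integral (fun t : n'.-tuple R => f (cons_tuple x t)))%E
  end.

(** f belongs to L^1(R^n): f is Borel measurable (the product sigma-algebra
    on n.-tuple R is the Borel sigma-algebra of R^n) and \int |f| < oo. *)
Definition L1 n (f : 'rV[R]_n -> R) : Prop :=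
  measurable_fun [set: n.-tuple R] (fun t => f (row_of_tuple t)) /\
  (iter_lebesgue_integral (fun t => (`| f (row_of_tuple t) |)%:E) < +oo)%E.

(** Lip(f) < oo is the library notion [lipschitz f x | x in setT],
    written `lipschitz f`. *)

Definition C1 n (f : 'rV[R]_n -> 'rV[R]_n) : Prop :=
  (forall x, differentiable f x) /\
  continuous (fun x => lin1_mx ('d f x) : 'M[R]_n).

Definition diffeomorphism n (T Tinv : 'rV[R]_n -> 'rV[R]_n) : Prop :=
  cancel T Tinv /\ cancel Tinv T /\ C1 T /\ C1 Tinv.

Definition jacobian_det n (f : 'rV[R]_n -> 'rV[R]_n) (p : 'rV[R]_n) : R :=
  \det (lin1_mx ('d f p)).

Definition std_normal_pdf n (z : 'rV[R]_n) : R :=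
  (2 * pi) `^ (- (n%:R / 2)) * expR (- (\sum_j z ord0 j ^+ 2) / 2).

(** Density of the push-forward T_# P_Z, with Tinv = T^{-1}. *)
Definition pushforward_pdf n (Tinv : 'rV[R]_n -> 'rV[R]_n) (p : 'rV[R]_n) : R :=
  std_normal_pdf (Tinv p) * `| jacobian_det Tinv p |.

Definition patch d s (idx : 'I_s -> 'I_d) (x : 'rV[R]_d) : 'rV[R]_s :=
  \row_j x ord0 (idx j).

Definition patchNR d s Np (idx : 'I_Np -> 'I_s -> 'I_d)
    (Tinv : 'rV[R]_s -> 'rV[R]_s) (x : 'rV[R]_d) : R :=
  s%:R^-1 * \sum_(i < Np) - ln (pushforward_pdf Tinv (patch (idx i) x)).

End defs.

(* Main.v *)
Require Import Defs.
From HB Require Import structures.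
From mathcomp Require Import all_boot all_order all_algebra.
From mathcomp Require Import all_classical all_reals all_analysis.
Import Order.TTheory GRing.Theory Num.Theory.
Import numFieldNormedType.Exports.
From mathcomp Require Import fingroup perm measurable_realfun.
From mathcomp Require Import ring lra.
Local Open Scope ring_scope.
Local Open Scope classical_set_scope.
Section A.
Variable R : realType.

Lemma lip_unpack n (f : 'rV[R]_n -> 'rV[R]_n) :
  lipschitz f -> exists2 L : R, 0 < L & forall x y, `|f x - f y| <= L * `|x - y|.
Proof.
move=> /pinfty_ex_gt0 [L L0 H]; exists L => // x y.
exact: (H (x, y)).
Qed.

Lemma entry_le m n (M : 'M[R]_(m, n)) i j : `|M i j| <= `|M|.
Proof.
change (`|M i j| <= mx_norm M); rewrite mx_normrE.
exact: (le_bigmax _ _ (i, j)).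
Qed.

Lemma diff_bound n (f : 'rV[R]_n -> 'rV[R]_n) L p v :
  (forall x y, `|f x - f y| <= L * `|x - y|) -> differentiable f p ->
  `|'d f p v| <= L * `|v|.
Proof.
move=> Hf df; rewrite -deriveE //.
have dv := @diff_derivable _ _ _ f p v df.
rewrite /derive -lim_norm //.
apply: limr_le; first by apply/cvg_ex; eexists; apply: cvg_norm; exact: dv.
near=> h.
have h0 : h != 0 by near: h; exact: nbhs_dnbhs_neq.
rewrite /= normrZ normfV.
have hp : 0 < `|h| by rewrite normr_gt0.
rewrite ler_pdivrMl //.
apply: le_trans (Hf _ _) _.
by rewrite addrK normrZ mulrCA.
Unshelve. all: by end_near. Qed.

End A.

Section B.
Variable R : realType.

Lemma det_bound n (B : 'M[R]_n) L : 0 <= L -> (forall i j, `|B i j| <= L) ->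
  `|\det B| <= \sum_(s : 'S_n) L ^+ n.
Proof.
move=> L0 HB; rewrite /determinant; apply: le_trans (ler_norm_sum _ _ _) _.
apply: ler_sum => s _; rewrite normrM normrX normrN1 expr1n mul1r normr_prod.
rewrite -[n in X in _ <= X]card_ord -prodr_const.
by apply: ler_prod => i _; rewrite normr_ge0 HB.
Qed.

Lemma delta_norm n (i : 'I_n) : `|delta_mx 0 i : 'rV[R]_n| <= 1.
Proof.
change (mx_norm (delta_mx 0 i : 'rV[R]_n) <= 1); rewrite mx_normrE.
apply: bigmax_le; first exact: ler01.
move=> [a b] _; rewrite mxE /=.
by case: (_ && _); rewrite ?normr1 ?normr0.
Qed.

Lemma jac_entry_bound n (f : 'rV[R]_n -> 'rV[R]_n) L p i j :
  0 <= L ->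
  (forall x y, `|f x - f y| <= L * `|x - y|) -> differentiable f p ->
  `|lin1_mx ('d f p) i j| <= L.
Proof.
move=> L0 Hf df; rewrite mxE; apply: le_trans; first exact: entry_le.
apply: le_trans; first exact: (@diff_bound R n f L p (delta_mx 0 i) Hf df).
by rewrite ler_piMr // delta_norm.
Qed.

Lemma mx_eq1 n (M : 'M[R]_n) : (forall u : 'rV[R]_n, u *m M = u) -> M = 1%:M.
Proof.
move=> H; apply/row_matrixP => i.
by rewrite !rowE H mulmx1.
Qed.

Lemma jac_det_neq0 n (T Tinv : 'rV[R]_n -> 'rV[R]_n) :
  cancel T Tinv -> (forall x, differentiable T x) -> (forall x, differentiable Tinv x) ->
  forall x, jacobian_det Tinv (T x) != 0.
Proof.
move=> TK dT dTi x.
have hc : Tinv \o T = id by apply/funext => y /=; rewrite TK.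
have H : forall u, 'd Tinv (T x) ('d T x u) = u.
  move=> u; have := diff_comp (dT x) (dTi (T x)).
  move=> E; have := congr1 (fun g => g u) E => /= <-.
  have -> : 'd (Tinv \o T) x = 'd (@id 'rV[R]_n) x by rewrite hc.
  by rewrite (@diff_lin _ _ _ idfun) // => ?; exact: cvg_id.
have : lin1_mx ('d T x) *m lin1_mx ('d Tinv (T x)) = 1%:M.
  apply: mx_eq1 => u. rewrite mulmxA. rewrite mul_rV_lin1.
  have -> : u *m lin1_mx ('d T x) = 'd T x u by exact: mul_rV_lin1.
  exact: H.
move=> /(congr1 determinant); rewrite det_mulmx det1 /jacobian_det => E.
have : \det (lin1_mx ('d T x)) * \det (lin1_mx ('d Tinv (T x))) != 0.
  by rewrite E oner_eq0.
by rewrite mulf_eq0 negb_or => /andP[].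
Qed.
End B.

Section C.
Variable R : realType.
Variables (dd : measure_display) (T : measurableType dd) (n : nat).
Variable f : T -> 'rV[R]_n.
Hypothesis mf : forall j, measurable_fun setT (fun t => f t ord0 j).

Definition box (q : ({ffun 'I_n -> rat} * nat)%type) : set 'rV[R]_n :=
  [set p | forall j, `|p ord0 j - ratr (q.1 j)| < (q.2.+1%:R)^-1].

Lemma box_meas q : measurable (f @^-1` box q).
Proof.
have -> : f @^-1` box q = \bigcap_(j in [set: 'I_n])
    (setT `&` (fun t => f t ord0 j) @^-1` `](ratr (q.1 j) - (q.2.+1%:R)^-1),
                                          (ratr (q.1 j) + (q.2.+1%:R)^-1)[).
  apply/seteqP; split => [t /= H j _|t /= H j]; first by split => //; rewrite /= in_itv /= -ltr_distlC distrC H.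
  by have [_] := H j I; rewrite /= in_itv /= -ltr_distlC distrC.
apply: fin_bigcap_measurable; first exact: finite_finset.
move=> j _; exact: mf.
Qed.

Lemma open_preimage (U : set 'rV[R]_n) : open U -> measurable (f @^-1` U).
Proof.
move=> oU.
have -> : f @^-1` U = \bigcup_(q : ({ffun 'I_n -> rat} * nat)%type)
   (if pselect (box q `<=` U) is left _ then f @^-1` box q else set0).
  apply/seteqP; split => [t Ut|t [q _]]; last first.
    by case: pselect => // bU /bU.
  have := oU _ Ut; rewrite /interior => /nbhs_ballP [e e0 eU].
  have e20 : 0 < e / 2 by rewrite divr_gt0.
  have [N _ HN] := near_infty_natSinv_lt (PosNum e20).
  have {HN} HN := HN N (leqnn N); rewrite /= in HN.
  set r := (N.+1%:R : R)^-1 in HN.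
  have r0 : 0 < r by rewrite invr_gt0 ltr0n.
  have : forall j, exists qj : rat, `|f t ord0 j - ratr qj| < r.
    move=> j; have hlt : f t ord0 j - r < f t ord0 j + r by rewrite ltrBlDr -addrA ltrDl addr_gt0.
    have [qj] := rat_in_itvoo hlt.
    by rewrite in_itv /= -ltr_distlC => ?; exists qj.
  move=> /choice [g Hg].
  exists ([ffun j => g j], N) => //.
  case: pselect => /= [_|]; last first.
    apply; move=> p /= Hp; apply: eU.
    rewrite -ball_normE /=.
    change (mx_norm (f t - p) < e); rewrite mx_normrE.
    apply: bigmax_lt => // -[i j] _ /=; rewrite !mxE (ord1 i).
    have := Hp j; rewrite /= ffunE => Hpj.
    apply: le_lt_trans (ler_distD (ratr (g j)) _ _) _.
    rewrite (splitr e); apply: ltrD; first exact: lt_trans (Hg j) HN.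
    by rewrite distrC; exact: lt_trans Hpj HN.
  by move=> j; rewrite ffunE; exact: Hg.
apply: countable_bigcupT_measurable; first exact: countableP.
by move=> q; case: pselect => _ //; exact: box_meas.
Qed.

Lemma cont_meas (h : 'rV[R]_n -> R) : continuous h -> measurable_fun setT (h \o f).
Proof.
move=> /continuousP ch; apply: (measurability _ (measurable_realfun.RGenOpens.measurableE R)).
move=> _ [_ [a [b ->] <-]]; rewrite setTI.
rewrite comp_preimage; apply: open_preimage; apply: ch.
exact: interval_open.
Qed.

End C.

Local Open Scope ereal_scope.
Section D.
Variable R : realType.

Lemma le_int_nm (f g : R -> \bar R) : (forall x, 0 <= f x) -> (forall x, f x <= g x) ->
  \int[@lebesgue_measure R]_(x in [set: R]) f x <= \int[@lebesgue_measure R]_(x in [set: R]) g x.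
Proof.
move=> f0 fg.
have g0 : forall x, 0 <= g x by move=> x; exact: le_trans (f0 x) (fg x).
rewrite !ge0_integralE //; apply: ereal_sup_le => _ [h Hh <-].
exists h => //= x; apply: le_trans (Hh x) _.
by rewrite /patch /=; case: ifP.
Qed.

Lemma iter_ge0 n (f : n.-tuple R -> \bar R) : (forall t, 0 <= f t) ->
  0 <= iter_lebesgue_integral f.
Proof.
elim: n f => [|n IH] f f0 /=; first exact: f0.
by apply: integral_ge0 => x _; apply: IH.
Qed.

Lemma iter_le n (f g : n.-tuple R -> \bar R) : (forall t, 0 <= f t) ->
  (forall t, f t <= g t) -> iter_lebesgue_integral f <= iter_lebesgue_integral g.
Proof.
elim: n f g => [|n IH] f g f0 fg /=; first exact: fg.
apply: le_int_nm => x; first by apply: iter_ge0.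
by apply: IH.
Qed.

Lemma iter_gauss (sig : R) : sig != 0%R -> forall n (b : 'I_n -> R) (c : R), (0 <= c)%R ->
  iter_lebesgue_integral
    (fun t : n.-tuple R => (c * \prod_(k < n) normal_pdf (b k) sig (tnth t k))%:E) = c%:E.
Proof.
move=> s0; elim => [|n IH] b c c0 /=; first by rewrite big_ord0 mulr1.
under eq_integral => x _.
  have -> : (fun t : n.-tuple R => (c * \prod_(k < n.+1) normal_pdf (b k) sig (tnth (cons_tuple x t) k))%:E)
     = (fun t : n.-tuple R => ((c * normal_pdf (b ord0) sig x) *
          \prod_(k < n) normal_pdf (b (lift ord0 k)) sig (tnth t k))%:E).
    apply/funext => t; rewrite big_ord_recl mulrA.
    congr ((_ * _ * _)%:E).
    by apply: eq_bigr => k _; rewrite !(tnth_nth x).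
  rewrite IH; last by rewrite mulr_ge0 // normal_pdf_ge0.
  over.
rewrite /= (_ : (fun x => (c * normal_pdf (b ord0) sig x)%:E) = (fun x => c%:E * (normal_pdf (b ord0) sig x)%:E)); last by apply/funext => x; rewrite EFinM.
by rewrite ge0_integralZl_EFin //= ?integral_normal_pdf ?mule1 //; [move=> x _; rewrite lee_fin normal_pdf_ge0 | apply/measurable_EFinP; exact: measurable_normal_pdf].
Qed.

End D.

Local Close Scope ereal_scope.
Section E.
Variable R : realType.

Lemma normsq_le_sum n (z : 'rV[R]_n) : `|z| ^+ 2 <= \sum_j z ord0 j ^+ 2.
Proof.
have [z0|] := eqVneq (mx_norm z) 0.
  have -> : `|z| = 0 by exact: z0.
  by rewrite expr0n /= sumr_ge0 // => j _; exact: sqr_ge0.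
move=> /mx_norm_neq0 [[i j] /= E].
have -> : `|z| = `|z i j| by exact: E.
rewrite (ord1 i) real_normK ?num_real // (bigD1 j) //= lerDl sumr_ge0 // => k _; exact: sqr_ge0.
Qed.

Variables (s : nat) (T Tinv : 'rV[R]_s -> 'rV[R]_s) (LT M : R).
Hypothesis TiK : cancel Tinv T.
Hypothesis LT0 : 0 < LT.
Hypothesis HT : forall x y, `|T x - T y| <= LT * `|x - y|.
Hypothesis Hdet : forall p, 0 < `|jacobian_det Tinv p| <= M.

Lemma pf_bound y j : ln (pushforward_pdf Tinv y) <=
  ln ((2 * pi) `^ (- (s%:R / 2))) + ln M - (y ord0 j - T 0 ord0 j) ^+ 2 / (2 * LT ^+ 2).
Proof.
rewrite /pushforward_pdf /std_normal_pdf.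
set z := Tinv y; set cs := _ `^ _; set S := \sum_j0 _.
have cs0 : 0 < cs by apply: powR_gt0; rewrite mulr_gt0 ?pi_gt0.
have /andP [dpos dM] := Hdet y.
rewrite lnM ?posrE ?mulr_gt0 ?expR_gt0 // lnM ?posrE ?expR_gt0 // expRK.
have h1 : ln `|jacobian_det Tinv y| <= ln M.
  by rewrite ler_ln ?posrE // (lt_le_trans dpos dM).
set u := (y ord0 j - T 0 ord0 j) ^+ 2.
have hu : u <= LT ^+ 2 * S.
  have e1 : `|y - T 0| <= LT * `|z| by rewrite -{1}(TiK y) -/z; apply: le_trans (HT _ _) _; rewrite subr0.
  have e2 : u <= `|y - T 0| ^+ 2.
    rewrite /u -real_normK ?num_real //; apply: lerXn2r; rewrite ?nnegrE //.
    by have := @entry_le R _ _ (y - T 0) ord0 j; rewrite !mxE.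
  apply: (le_trans e2); apply: le_trans (_ : (LT * `|z|) ^+ 2 <= _).
    by apply: lerXn2r; rewrite ?nnegrE ?mulr_ge0 // ltW.
  rewrite exprMn; apply: ler_wpM2l; first by rewrite exprn_ge0 // ltW.
  exact: normsq_le_sum.
have h2 : u / (2 * LT ^+ 2) <= S / 2.
  have LT2 : 0 < LT ^+ 2 by rewrite exprn_gt0.
  rewrite ler_pdivrMr ?mulr_gt0 //.
  have -> : S / 2 * (2 * LT ^+ 2) = LT ^+ 2 * S by field.
  exact: hu.
lra.
Qed.

End E.

Section F.
Variable R : realType.
Variables (d s Np : nat) (idx : 'I_Np -> 'I_s -> 'I_d) (Tinv : 'rV[R]_s -> 'rV[R]_s).
Variables (C0 LT : R) (a : 'rV[R]_s) (ik : 'I_d -> 'I_Np) (jk : 'I_d -> 'I_s).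
Hypothesis LT0 : 0 < LT.
Hypothesis pfb : forall y j, ln (pushforward_pdf Tinv y) <= C0 - (y ord0 j - a ord0 j) ^+ 2 / (2 * LT ^+ 2).
Hypothesis Hk : forall k, idx (ik k) (jk k) = k.
Hypothesis d0 : (0 < d)%N.

Lemma D_bound (x : 'rV[R]_d) :
  \sum_i ln (pushforward_pdf Tinv (Defs.patch (idx i) x)) <=
  Np%:R * C0 - (\sum_k (x ord0 k - a ord0 (jk k)) ^+ 2) / (2 * LT ^+ 2 * d%:R).
Proof.
set D := \sum_i _.
have H1 : forall k, D - Np%:R * C0 <= - ((x ord0 k - a ord0 (jk k)) ^+ 2 / (2 * LT ^+ 2)).
  move=> k.
  have -> : D - Np%:R * C0 = \sum_i (ln (pushforward_pdf Tinv (Defs.patch (idx i) x)) - C0).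
    by rewrite sumrB sumr_const card_ord mulr_natl.
  rewrite (bigD1 (ik k)) //=.
  have h1 : \sum_(i | i != ik k) (ln (pushforward_pdf Tinv (Defs.patch (idx i) x)) - C0) <= 0.
    apply: sumr_le0 => i _; rewrite subr_le0; apply: le_trans (pfb _ (jk k)) _.
    by rewrite lerBlDr lerDl divr_ge0 ?sqr_ge0 // mulr_ge0 // exprn_ge0 // ltW.
  have h2 := pfb (Defs.patch (idx (ik k)) x) (jk k).
  rewrite /Defs.patch mxE Hk in h2.
  lra.
have H2 : \sum_(k < d) (D - Np%:R * C0) <= \sum_(k < d) - ((x ord0 k - a ord0 (jk k)) ^+ 2 / (2 * LT ^+ 2)).
  by apply: ler_sum => k _; exact: H1.
rewrite sumr_const card_ord sumrN -mulr_suml in H2.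
have dp : 0 < d%:R :> R by rewrite ltr0n.
have LT2 : 0 < LT ^+ 2 by rewrite exprn_gt0.
set S := \sum_k _ in H2 *.
have -> : S / (2 * LT ^+ 2 * d%:R) = (S / (2 * LT ^+ 2)) / d%:R.
  by field; rewrite ?gt_eqF.

have H3 : D - Np%:R * C0 <= - (S / (2 * LT ^+ 2)) / d%:R.
  by rewrite ler_pdivlMr // mulr_natr.
rewrite mulNr in H3; lra.
Qed.


Variable rho : R.
Hypothesis rho0 : 0 < rho.
Hypothesis s0 : (0 < s)%N.

Definition bet := rho / s%:R / (2 * LT ^+ 2 * d%:R).
Definition sig := Num.sqrt ((2 * bet)^-1).
Definition cst0 := expR (rho / s%:R * (Np%:R * C0)) * (normal_peak sig)^-1 ^+ d.

Lemma bet_gt0 : 0 < bet.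
Proof. by rewrite /bet !divr_gt0 ?ltr0n ?mulr_gt0 ?exprn_gt0 ?ltr0n. Qed.

Lemma sig_neq0 : sig != 0.
Proof. by rewrite /sig gt_eqF // sqrtr_gt0 invr_gt0 mulr_gt0 // bet_gt0. Qed.

Lemma phi_bound x : expR (- rho * patchNR idx Tinv x) <=
  cst0 * \prod_(k < d) normal_pdf (a ord0 (jk k)) sig (x ord0 k).
Proof.
rewrite /patchNR.
set D := \sum_i ln (pushforward_pdf Tinv (Defs.patch (idx i) x)).
have -> : - rho * (s%:R^-1 * \sum_i - ln (pushforward_pdf Tinv (Defs.patch (idx i) x))) = rho / s%:R * D.
  by rewrite sumrN mulrN mulrNN mulrA.
have rs0 : 0 <= rho / s%:R by rewrite divr_ge0 // ltW.
apply: le_trans (_ : expR (rho / s%:R * (Np%:R * C0 -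
   (\sum_k (x ord0 k - a ord0 (jk k)) ^+ 2) / (2 * LT ^+ 2 * d%:R))) <= _).
  rewrite ler_expR; apply: ler_wpM2l; [exact: rs0 | exact: D_bound].
rewrite mulrBr expRD /cst0 -(mulrA (expR _)); apply: ler_wpM2l; first exact: expR_ge0.
have -> : rho / s%:R * ((\sum_k (x ord0 k - a ord0 (jk k)) ^+ 2) / (2 * LT ^+ 2 * d%:R))
   = \sum_k bet * (x ord0 k - a ord0 (jk k)) ^+ 2.
  by rewrite -mulr_sumr /bet mulrA mulrAC.
rewrite -sumrN expR_sum.
rewrite -[d in X in _ <= X * _]card_ord -prodr_const -big_split /=.
apply: ler_prod => k _; rewrite expR_ge0 /=.
have pk0 : 0 < normal_peak sig by apply: normal_peak_gt0; exact: sig_neq0.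
rewrite /normal_pdf (negbTE sig_neq0) mulKf ?gt_eqF // /normal_fun.
rewrite /sig sqr_sqrtr; last by rewrite invr_ge0 mulr_ge0 // ltW // bet_gt0.
rewrite le_eqVlt; apply/orP; left; apply/eqP; congr expR.
have := bet_gt0; move=> b0.
by field; rewrite gt_eqF.
Qed.

End F.


Theorem proposition1 (R : realType) (d s Np : nat)
    (T Tinv : 'rV[R]_s -> 'rV[R]_s)
    (idx : 'I_Np -> 'I_s -> 'I_d) :
  diffeomorphism T Tinv ->
  lipschitz T -> lipschitz Tinv ->
  (forall i, injective (idx i)) ->
  (forall k : 'I_d, exists i : 'I_Np, exists j : 'I_s, idx i j = k) ->
  forall rho : R, 0 < rho ->
  L1 (fun x : 'rV[R]_d => expR (- rho * patchNR idx Tinv x)).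
Proof.
move=> [TK [TiK [[dT cT] [dTi cTi]]]] lipT lipTi _ cover rho rho0.
have cTinv : forall j : 'I_s, continuous (fun p : 'rV[R]_s => Tinv p ord0 j).
  move=> j p; apply: (@continuous_comp _ _ _ Tinv (fun M : 'rV[R]_s => M ord0 j)).
    exact: differentiable_continuous.
  exact: coord_continuous.
have cJ : forall i j : 'I_s, continuous (fun p : 'rV[R]_s => lin1_mx ('d Tinv p) i j).
  move=> i j p; apply: (@continuous_comp _ _ _ (fun x => lin1_mx ('d Tinv x)) (fun M : 'M[R]_s => M i j)).
    exact: cTi.
  exact: coord_continuous.
have meas : measurable_fun [set: d.-tuple R]
    (fun t => expR (- rho * patchNR idx Tinv (row_of_tuple t))).
  apply: measurableT_comp => //; apply: measurable_funM => //.
  rewrite /patchNR; apply: measurable_funM => //.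
  apply: measurable_sum => i; apply: measurable_funN.
  apply: measurableT_comp; first exact: measurable_ln.
  have mF : forall j, measurable_fun setT
      (fun t : d.-tuple R => Defs.patch (idx i) (row_of_tuple t) ord0 j).
    move=> j; rewrite /Defs.patch /row_of_tuple.
    under eq_fun do rewrite !mxE.
    exact: measurable_tnth.
  rewrite /pushforward_pdf /std_normal_pdf; apply: measurable_funM.
    apply: measurable_funM => //; apply: measurableT_comp => //.
    apply: measurable_funM => //; apply: measurable_funN.
    apply: measurable_sum => j; apply: measurable_funX.
    exact: (@cont_meas R _ _ _ _ mF _ (cTinv j)).
  apply: measurableT_comp; first exact: normr_measurable.
  rewrite /jacobian_det /determinant.
  apply: measurable_sum => sg; apply: measurable_funM => //.
  apply: measurable_prod => i0 _.
  exact: (@cont_meas R _ _ _ _ mF _ (cJ i0 (sg i0))).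
split; first exact: meas.
case: d idx cover meas => [|d'] idx cover meas.
  by rewrite /= ltry.
set d := d'.+1.
have d0 : (0 < d)%N by [].
have s0 : (0 < s)%N.
  have [i [j _]] := cover ord0.
  exact: (leq_ltn_trans (leq0n j) (ltn_ord j)).
have /choice [g Hg] : forall k : 'I_d, exists p : 'I_Np * 'I_s, idx p.1 p.2 = k.
  by move=> k; have [i [j E]] := cover k; exists (i, j).
have [LT LT0 HT] := @lip_unpack R _ T lipT.
have [LI LI0 HI] := @lip_unpack R _ Tinv lipTi.
set M := \sum_(sg : 'S_s) LI ^+ s.
have Hdet : forall p, 0 < `|jacobian_det Tinv p| <= M.
  move=> p; apply/andP; split.
    rewrite normr_gt0 -{1}(TiK p); exact: (@jac_det_neq0 R s T Tinv TK dT dTi (Tinv p)).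
  apply: (@det_bound R); first exact: ltW.
  move=> i j; apply: (@jac_entry_bound R); [exact: ltW | exact: HI | exact: dTi].
have pfb := @pf_bound R s T Tinv LT M TiK LT0 HT Hdet.
have phb := @phi_bound R d s Np idx Tinv _ LT (T 0) (fun k => (g k).1) (fun k => (g k).2) LT0 pfb Hg d0 rho rho0 s0.
set b := fun k : 'I_d => T 0 ord0 (g k).2.
have sg0 : sig R d s LT rho != 0 by apply: sig_neq0.
set c := cst0 _ _ _ _ _ _ _ in phb.
have c0 : 0 <= c.
  by rewrite /c /cst0 mulr_ge0 ?expR_ge0 // exprn_ge0 // invr_ge0 normal_peak_ge0.
apply: (@le_lt_trans _ _ (iter_lebesgue_integral
   (fun t : d.-tuple R => (c * \prod_(k < d) normal_pdf (b k) (sig R d s LT rho) (tnth t k))%:E))).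
  apply: (@iter_le R) => t; first by rewrite lee_fin normr_ge0.
  rewrite lee_fin ger0_norm ?expR_ge0 //.
  apply: le_trans (phb _) _.
  by rewrite le_eqVlt; apply/orP; left; apply/eqP; congr (_ * _); apply: eq_bigr => k _; rewrite /row_of_tuple mxE.
by rewrite (@iter_gauss R _ sg0) ?ltry.
Qed.
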